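(* For any natural number $n \geq 1$, $\{\omega^n, (\omega^n)^\star\} \leq_c \{\omega^{2n}, (\omega^{2n})^\star\}$.
   Context: Structures have domains contained in $\omega$. For countable structures $\mathcal{A},\mathcal{B}$, the class $\{\mathcal{A},\mathcal{B}\}$ denotes the class of all structures (with domain $\subseteq\omega$) isomorphic to $\mathcal{A}$ or to $\mathcal{B}$. Linear orders are in the language $\{<\}$; $L^\star$ is the reverse of a linear order $L$; $\omega^n$ denotes ordinal exponentiation (as an order type). An enumeration operator $\Gamma$ is a c.e. set of pairs $(\alpha,\varphi)$ with $\alpha$ a finite set of basic (atomic or negated atomic) sentences of the input language with constants from $\omega$ and $\varphi$ a basic sentence of the output language with constants from $\omega$; $\Gamma(X)=\{\varphi : (\alpha,\varphi)\in\Gamma,\ \alpha\subseteq X\}$. $\Gamma$ is a computable embedding of $\mathcal{K}_0$ into $\mathcal{K}_1$ ($\mathcal{K}_0\leq_c\mathcal{K}_1$) if for every $\mathcal{A}\in\mathcal{K}_0$, $\Gamma$ applied to the atomic diagram of $\mathcal{A}$ is the atomic diagram of a structure $\Gamma(\mathcal{A})\in\mathcal{K}_1$, and for all $\mathcal{A},\mathcal{B}\in\mathcal{K}_0$, $\mathcal{A}\cong\mathcal{B}$ iff $\Gamma(\mathcal{A})\cong\Gamma(\mathcal{B})$. *)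

(* Defs.v *)
From Stdlib Require Import Arith List.
Import ListNotations.

Inductive prf : Type :=
| PZero : prf
| PSucc : prf
| PProj : nat -> prf                (* i-th argument (0 if absent) *)
| PComp : prf -> list prf -> prf
| PPrec : prf -> prf -> prf
| PMu   : prf -> prf.

Inductive eval : prf -> list nat -> nat -> Prop :=
| ev_zero v : eval PZero v 0
| ev_succ v : eval PSucc v (S (hd 0 v))
| ev_proj i v : eval (PProj i) v (nth i v 0)
| ev_comp f gs v ws y : evals gs v ws -> eval f ws y -> eval (PComp f gs) v y
| ev_prec0 f g v y : eval f v y -> eval (PPrec f g) (0 :: v) y
| ev_precS f g n v z y :
    eval (PPrec f g) (n :: v) z -> eval g (n :: z :: v) y ->
    eval (PPrec f g) (S n :: v) y
| ev_mu f v n :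
    eval f (n :: v) 0 ->
    (forall m, m < n -> exists k, eval f (m :: v) (S k)) ->
    eval (PMu f) v n
with evals : list prf -> list nat -> list nat -> Prop :=
| evs_nil v : evals [] v []
| evs_cons g gs v w ws : eval g v w -> evals gs v ws -> evals (g :: gs) v (w :: ws).

(** [halts e x]: program [e] converges on input [x].
    A set of naturals is c.e. iff it is [halts e] for some [e]. *)
Definition halts (e : prf) (x : nat) : Prop := exists y, eval e [x] y.

Definition npair (a b : nat) : nat := (a + b) * (a + b + 1) / 2 + b.

(** Basic sentences of the language {<} with constants from omega *)
Inductive atom : Type :=
| ALt : nat -> nat -> atom
| AEq : nat -> nat -> atom.

Inductive basic : Type :=
| Pos : atom -> basic
| Neg : atom -> basic.

Definition code_atom (a : atom) : nat :=
  match a with ALt x y => npair 0 (npair x y) | AEq x y => npair 1 (npair x y) end.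
Definition code_basic (b : basic) : nat :=
  match b with Pos a => npair 0 (code_atom a) | Neg a => npair 1 (code_atom a) end.
Fixpoint code_list (l : list basic) : nat :=
  match l with [] => 0 | b :: l' => S (npair (code_basic b) (code_list l')) end.

(** * Enumeration operators
    The operator given by program [e] is the c.e. set of pairs (alpha, phi)
    (alpha a finite set of basic sentences, presented as a list) whose codes
    are accepted by [e]. *)
Definition enum_apply (e : prf) (X : basic -> Prop) : basic -> Prop :=
  fun phi => exists alpha : list basic,
    halts e (npair (code_list alpha) (code_basic phi)) /\
    (forall psi, In psi alpha -> X psi).

(** * Structures in the language {<} with domain contained in omega *)
Record structure : Type := Struct { dom : nat -> Prop ; rel : nat -> nat -> Prop }.

Definition atom_consts (a : atom) : list nat :=
  match a with ALt x y => [x; y] | AEq x y => [x; y] end.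

Definition atom_holds (S : structure) (a : atom) : Prop :=
  match a with ALt x y => rel S x y | AEq x y => x = y end.

Definition diagram (S : structure) (phi : basic) : Prop :=
  match phi with
  | Pos a => (forall c, In c (atom_consts a) -> dom S c) /\ atom_holds S a
  | Neg a => (forall c, In c (atom_consts a) -> dom S c) /\ ~ atom_holds S a
  end.

Definition struct_iso (S T : structure) : Prop :=
  exists f : nat -> nat,
    (forall x, dom S x -> dom T (f x)) /\
    (forall x y, dom S x -> dom S y -> f x = f y -> x = y) /\
    (forall z, dom T z -> exists x, dom S x /\ f x = z) /\
    (forall x y, dom S x -> dom S y -> (rel S x y <-> rel T (f x) (f y))).

Definition iso_to (S : structure) (T : Type) (R : T -> T -> Prop) : Prop :=
  exists f : nat -> T,
    (forall x y, dom S x -> dom S y -> f x = f y -> x = y) /\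
    (forall t, exists x, dom S x /\ f x = t) /\
    (forall x y, dom S x -> dom S y -> (rel S x y <-> R (f x) (f y))).

(** The ordinal omega^n: n-tuples of naturals in lexicographic order, first
    coordinate most significant. *)
Fixpoint lexlt (l m : list nat) : Prop :=
  match l, m with
  | a :: l', b :: m' => a < b \/ (a = b /\ lexlt l' m')
  | _, _ => False
  end.

Definition omega_pow (n : nat) : Type := { l : list nat | length l = n }.
Definition omega_pow_lt (n : nat) (x y : omega_pow n) : Prop := lexlt (proj1_sig x) (proj1_sig y).
Definition omega_pow_rev_lt (n : nat) (x y : omega_pow n) : Prop := omega_pow_lt n y x.

Definition class_omega_pow (n : nat) (S : structure) : Prop :=
  iso_to S (omega_pow n) (omega_pow_lt n) \/ iso_to S (omega_pow n) (omega_pow_rev_lt n).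

Definition computable_embedding (e : prf) (K0 K1 : structure -> Prop) : Prop :=
  (forall A, K0 A -> exists B, K1 B /\
       (forall phi, enum_apply e (diagram A) phi <-> diagram B phi)) /\
  (forall A B A' B', K0 A -> K0 B ->
       (forall phi, enum_apply e (diagram A) phi <-> diagram A' phi) ->
       (forall phi, enum_apply e (diagram B) phi <-> diagram B' phi) ->
       (struct_iso A B <-> struct_iso A' B')).

Definition comp_reducible (K0 K1 : structure -> Prop) : Prop :=
  exists e : prf, computable_embedding e K0 K1.

(* Main.v *)
Require Import Defs.
From Stdlib Require Import Arith List Lia Classical Eqdep_dec IndefiniteDescription.
Import ListNotations.


Fixpoint T (k : nat) : nat := match k with 0 => 0 | S k' => T k' + S k' end.

Lemma T2 k : k * (k + 1) = T k * 2.
Proof. induction k; simpl; lia. Qed.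

Lemma npair_T a b : npair a b = T (a + b) + b.
Proof. unfold npair. rewrite T2, Nat.div_mul by lia. reflexivity. Qed.

Fixpoint unpair (p : nat) : nat * nat :=
  match p with 0 => (0,0) | S p' => let (a,b) := unpair p' in
    match a with 0 => (S b, 0) | S a' => (a', S b) end end.

Lemma unpair_S p : unpair (S p) = let (a,b) := unpair p in
    match a with 0 => (S b, 0) | S a' => (a', S b) end.
Proof. reflexivity. Qed.

Lemma unpair_T s : forall b, b <= s -> unpair (T s + b) = (s - b, b).
Proof.
  induction s; intros b Hb.
  - assert (b = 0) by lia; subst; reflexivity.
  - induction b.
    + replace (T (S s) + 0) with (S (T s + s)) by (simpl; lia).
      rewrite unpair_S, IHs by lia. replace (s - s) with 0 by lia. reflexivity.
    + replace (T (S s) + S b) with (S (T (S s) + b)) by lia.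
      rewrite unpair_S, IHb by lia.
      replace (S s - b) with (S (s - b)) by lia. f_equal.
Qed.

Lemma unpair_npair a b : unpair (npair a b) = (a, b).
Proof. rewrite npair_T, unpair_T by lia. f_equal; lia. Qed.

Lemma npair_inj a b c d : npair a b = npair c d -> a = c /\ b = d.
Proof. intro H. pose proof (unpair_npair a b). rewrite H, unpair_npair in H0.
  inversion H0; auto. Qed.

Lemma npair_unpair p : npair (fst (unpair p)) (snd (unpair p)) = p.
Proof.
  induction p. reflexivity.
  rewrite unpair_S. destruct (unpair p) as [a b]. simpl fst in *. simpl snd in *.
  rewrite !npair_T in *.
  destruct a.
  - simpl fst; simpl snd. rewrite Nat.add_0_l in IHp. rewrite !Nat.add_0_r. simpl T. lia.
  - simpl fst; simpl snd. replace (a + S b) with (S a + b) by lia. lia.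
Qed.

Definition ONE := PComp PSucc [PZero].
Definition ADD := PPrec (PProj 0) (PComp PSucc [PProj 1]).
Definition MUL := PPrec PZero (PComp ADD [PProj 1; PProj 2]).
Definition PRED := PPrec PZero (PProj 0).
Definition SUB := PPrec (PProj 0) (PComp PRED [PProj 1]).
Definition TRI := PPrec PZero (PComp ADD [PProj 1; PComp PSucc [PProj 0]]).
Definition NPAIR := PComp ADD [PComp TRI [PComp ADD [PProj 0; PProj 1]]; PProj 1].

Ltac evs := repeat (apply evs_cons || apply evs_nil).

Lemma ADD_ok a b : eval ADD [a; b] (a + b).
Proof.
  induction a.
  - apply ev_prec0. apply (ev_proj 0 [b]).
  - eapply ev_precS. exact IHa.
    eapply ev_comp. evs. apply (ev_proj 1). apply (ev_succ [a+b]).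
Qed.

Lemma MUL_ok a b : eval MUL [a; b] (a * b).
Proof.
  induction a.
  - apply ev_prec0. apply ev_zero.
  - eapply ev_precS. exact IHa.
    eapply ev_comp. evs. apply (ev_proj 1). apply (ev_proj 2).
    replace (S a * b) with (a * b + b) by lia. apply ADD_ok.
Qed.

Lemma PRED_ok a : eval PRED [a] (pred a).
Proof.
  induction a.
  - apply ev_prec0. apply ev_zero.
  - eapply ev_precS. exact IHa. apply (ev_proj 0).
Qed.

Lemma SUB_ok b a : eval SUB [b; a] (a - b).
Proof.
  induction b.
  - apply ev_prec0. replace (a - 0) with a by lia. apply (ev_proj 0 [a]).
  - eapply ev_precS. exact IHb.
    eapply ev_comp. evs. apply (ev_proj 1).
    replace (a - S b) with (pred (a - b)) by lia. apply PRED_ok.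
Qed.

Lemma TRI_ok k : eval TRI [k] (T k).
Proof.
  induction k.
  - apply ev_prec0. apply ev_zero.
  - eapply ev_precS. exact IHk.
    eapply ev_comp. evs. apply (ev_proj 1).
    eapply ev_comp. evs. apply (ev_proj 0). apply (ev_succ [k]).
    apply ADD_ok.
Qed.

Lemma NPAIR_ok a b : eval NPAIR [a; b] (npair a b).
Proof.
  rewrite npair_T. eapply ev_comp. evs.
  eapply ev_comp. evs. eapply ev_comp. evs. apply (ev_proj 0). apply (ev_proj 1).
  apply ADD_ok. apply TRI_ok. apply (ev_proj 1). apply ADD_ok.
Qed.


Inductive ex : Type :=
| EV (i : nat) | EZ | ES (e : ex) | EAdd (e1 e2 : ex) | EMul (e1 e2 : ex)
| ESub (e1 e2 : ex) | ENp (e1 e2 : ex) | EBS (k : nat) (b body : ex).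

Fixpoint Rb (F : list nat -> nat) (n : nat) (w : list nat) : nat :=
  match n with 0 => 1 | S n' => Rb F n' w * F (n' :: Rb F n' w :: w) end.

Definition wk (k : nat) (v : list nat) := map (fun j => nth j v 0) (seq 0 k).

Fixpoint den (e : ex) (v : list nat) : nat :=
  match e with
  | EV i => nth i v 0 | EZ => 0 | ES e => S (den e v)
  | EAdd a b => den a v + den b v | EMul a b => den a v * den b v
  | ESub a b => den a v - den b v | ENp a b => npair (den a v) (den b v)
  | EBS k b body => Rb (den body) (den b v) (wk k v)
  end.

Fixpoint compile (e : ex) : prf :=
  match e with
  | EV i => PProj i | EZ => PZero | ES e => PComp PSucc [compile e]
  | EAdd a b => PComp ADD [compile a; compile b]
  | EMul a b => PComp MUL [compile a; compile b]
  | ESub a b => PComp SUB [compile b; compile a]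
  | ENp a b => PComp NPAIR [compile a; compile b]
  | EBS k b body => PComp (PPrec ONE (PComp MUL [PProj 1; compile body]))
                          (compile b :: map PProj (seq 0 k))
  end.

Lemma evals_proj s v : evals (map PProj s) v (map (fun j => nth j v 0) s).
Proof. induction s; simpl; constructor; auto. apply ev_proj. Qed.

Lemma compile_ok e : forall v, eval (compile e) v (den e v).
Proof.
  induction e; intro v; simpl.
  - apply ev_proj.
  - apply ev_zero.
  - eapply ev_comp. evs. apply IHe. apply (ev_succ [den e v]).
  - eapply ev_comp. evs; auto. apply ADD_ok.
  - eapply ev_comp. evs; auto. apply MUL_ok.
  - eapply ev_comp. evs; auto. apply SUB_ok.
  - eapply ev_comp. evs; auto. apply NPAIR_ok.
  - eapply ev_comp. apply evs_cons. apply IHe1. apply evals_proj.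
    fold (wk k v). generalize (wk k v) (den e1 v). intros w n.
    induction n.
    + apply ev_prec0. eapply ev_comp. evs. apply ev_zero. apply (ev_succ [0]).
    + eapply ev_precS. exact IHn.
      eapply ev_comp. evs. apply (ev_proj 1). apply IHe2. apply MUL_ok.
Qed.

Inductive prim : prf -> Prop :=
| pr_z : prim PZero | pr_s : prim PSucc | pr_p i : prim (PProj i)
| pr_c f gs : prim f -> Forall prim gs -> prim (PComp f gs)
| pr_r f g : prim f -> prim g -> prim (PPrec f g).

Scheme eval_mind := Induction for eval Sort Prop
  with evals_mind := Induction for evals Sort Prop.

Lemma det : forall P v y, eval P v y -> prim P -> forall y', eval P v y' -> y = y'.
Proof.
  apply (eval_mind (fun P v y _ => prim P -> forall y', eval P v y' -> y = y')
                   (fun gs v ws _ => Forall prim gs -> forall ws', evals gs v ws' -> ws = ws'));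
  intros.
  - inversion H0; auto.
  - inversion H0; auto.
  - inversion H0; auto.
  - inversion H1; subst. inversion H2; subst.
    assert (ws = ws0) by auto. subst. auto.
  - inversion H0; subst. inversion H1; subst. auto.
  - inversion H1; subst. inversion H2; subst.
    assert (z = z0) by auto. subst. auto.
  - inversion H0.
  - inversion H0; auto.
  - inversion H1; subst. inversion H2; subst. f_equal; auto.
Qed.

Lemma prim_compile e : prim (compile e).
Proof.
  assert (HA : prim ADD) by (repeat constructor).
  assert (HM : prim MUL) by (repeat constructor; auto).
  assert (HS : prim SUB) by (repeat constructor).
  assert (HN : prim NPAIR) by (repeat constructor; auto).
  induction e; simpl; repeat constructor; auto.
  clear. induction (seq 0 k); simpl; constructor; auto. constructor.
Qed.

Lemma compile_det e v y : eval (compile e) v y -> y = den e v.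
Proof. intro H. symmetry. exact (det _ _ _ (compile_ok e v) (prim_compile e) y H). Qed.

Lemma Rb_zero F n w : Rb F n w = 0 <-> exists i, i < n /\ F (i :: Rb F i w :: w) = 0.
Proof.
  induction n; simpl.
  - split. discriminate. intros [i [Hi _]]; lia.
  - rewrite Nat.eq_mul_0, IHn. split.
    + intros [[i [Hi H]]|H]; exists i || exists n; split; auto; lia.
    + intros [i [Hi H]]. destruct (Nat.eq_dec i n). subst; auto.
      left; exists i; split; auto; lia.
Qed.


Definition code (alpha : list basic) (phi : basic) := npair (code_list alpha) (code_basic phi).
Definition dd c := Pos (AEq c c).
Definition al1 a b := [dd a; dd b].
Definition ph1 a b := Pos (AEq (npair a b) (npair a b)).
Definition al2 a b c d := [dd a; dd b; dd c; dd d].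
Definition ph2 a b c d := Neg (AEq (npair a b) (npair c d)).
Definition al3 a b c d := [Pos (ALt a c); dd b; dd d].
Definition ph3 a b c d := Pos (ALt (npair a b) (npair c d)).
Definition al4 a b d := [dd a; Pos (ALt b d)].
Definition ph4 a b d := Pos (ALt (npair a b) (npair a d)).
Definition al5 a b c d := [Neg (ALt a c); Neg (AEq a c); dd b; dd d].
Definition ph5 a b c d := Neg (ALt (npair a b) (npair c d)).
Definition al6 a b c d := [Neg (ALt a c); Neg (ALt b d)].

Definition eqd (u v : nat) := (u - v) + (v - u).

Definition testF a b c d x :=
  eqd x (code (al1 a b) (ph1 a b)) *
  ((eqd x (code (al2 a b c d) (ph2 a b c d)) + (1 - eqd (npair a b) (npair c d))) *
  (eqd x (code (al3 a b c d) (ph3 a b c d)) *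
  (eqd x (code (al4 a b d) (ph4 a b d)) *
  (eqd x (code (al5 a b c d) (ph5 a b c d)) *
   eqd x (code (al6 a b c d) (ph5 a b c d)))))).

Definition caseS a b c d x :=
  x = code (al1 a b) (ph1 a b) \/
  (x = code (al2 a b c d) (ph2 a b c d) /\ npair a b <> npair c d) \/
  x = code (al3 a b c d) (ph3 a b c d) \/
  x = code (al4 a b d) (ph4 a b d) \/
  x = code (al5 a b c d) (ph5 a b c d) \/
  x = code (al6 a b c d) (ph5 a b c d).

Lemma eqd0 u v : eqd u v = 0 <-> u = v.
Proof. unfold eqd; lia. Qed.
Lemma neqd0 u v : 1 - eqd u v = 0 <-> u <> v.
Proof. unfold eqd; lia. Qed.

Lemma testF_zero a b c d x : testF a b c d x = 0 <-> caseS a b c d x.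
Proof.
  unfold testF, caseS.
  rewrite !Nat.eq_mul_0, !Nat.eq_add_0, !eqd0, neqd0. tauto.
Qed.

Definition E1 := ES EZ.
Definition Elt x y := ENp EZ (ENp x y).
Definition Eeq x y := ENp E1 (ENp x y).
Definition Epos a := ENp EZ a.
Definition Eneg a := ENp E1 a.
Definition Econs b l := ES (ENp b l).
Definition Edd c := Epos (Eeq c c).
Definition Ecode l p := ENp l p.
Definition Eeqd u v := EAdd (ESub u v) (ESub v u).

Section Tst.
Variables (a b c d x : ex).
Definition Eal1 := Econs (Edd a) (Econs (Edd b) EZ).
Definition Eph1 := Epos (Eeq (ENp a b) (ENp a b)).
Definition Eal2 := Econs (Edd a) (Econs (Edd b) (Econs (Edd c) (Econs (Edd d) EZ))).
Definition Eph2 := Eneg (Eeq (ENp a b) (ENp c d)).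
Definition Eal3 := Econs (Epos (Elt a c)) (Econs (Edd b) (Econs (Edd d) EZ)).
Definition Eph3 := Epos (Elt (ENp a b) (ENp c d)).
Definition Eal4 := Econs (Edd a) (Econs (Epos (Elt b d)) EZ).
Definition Eph4 := Epos (Elt (ENp a b) (ENp a d)).
Definition Eal5 := Econs (Eneg (Elt a c)) (Econs (Eneg (Eeq a c)) (Econs (Edd b) (Econs (Edd d) EZ))).
Definition Eph5 := Eneg (Elt (ENp a b) (ENp c d)).
Definition Eal6 := Econs (Eneg (Elt a c)) (Econs (Eneg (Elt b d)) EZ).
Definition Etest :=
  EMul (Eeqd x (Ecode Eal1 Eph1))
  (EMul (EAdd (Eeqd x (Ecode Eal2 Eph2)) (ESub E1 (Eeqd (ENp a b) (ENp c d))))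
  (EMul (Eeqd x (Ecode Eal3 Eph3))
  (EMul (Eeqd x (Ecode Eal4 Eph4))
  (EMul (Eeqd x (Ecode Eal5 Eph5)) (Eeqd x (Ecode Eal6 Eph5)))))).
End Tst.

Definition testE := Etest (EV 6) (EV 4) (EV 2) (EV 0) (EV 9).

Lemma den_testE v : den testE v = testF (nth 6 v 0) (nth 4 v 0) (nth 2 v 0) (nth 0 v 0) (nth 9 v 0).
Proof. reflexivity. Qed.

Definition fexpr := EBS 2 (EV 0) (EBS 4 (EV 2) (EBS 6 (EV 4) (EBS 8 (EV 6) testE))).

Lemma den_EBS_zero k b body v : den (EBS k b body) v = 0 <->
  exists i, i < den b v /\ den body (i :: Rb (den body) i (wk k v) :: wk k v) = 0.
Proof. simpl. apply Rb_zero. Qed.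

Lemma fexpr_zero m x : den fexpr [m; x] = 0 <->
  exists a b c d, a < m /\ b < m /\ c < m /\ d < m /\ testF a b c d x = 0.
Proof.
  unfold fexpr. rewrite den_EBS_zero. split.
  - intros [a [Ha H]]. rewrite den_EBS_zero in H. destruct H as [b [Hb H]].
    rewrite den_EBS_zero in H. destruct H as [c [Hc H]].
    rewrite den_EBS_zero in H. destruct H as [d [Hd H]].
    rewrite den_testE in H. simpl in *. exists a, b, c, d. auto.
  - intros [a [b [c [d [Ha [Hb [Hc [Hd H]]]]]]]].
    exists a. split. exact Ha. rewrite den_EBS_zero.
    exists b. split. exact Hb. rewrite den_EBS_zero.
    exists c. split. exact Hc. rewrite den_EBS_zero.
    exists d. split. exact Hd. rewrite den_testE. exact H.
Qed.

Definition E := PMu (compile fexpr).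

Lemma least (h : nat -> nat) N : h N = 0 -> exists n, h n = 0 /\ forall m, m < n -> h m <> 0.
Proof.
  induction N as [N IH] using lt_wf_ind. intro HN.
  destruct (classic (exists m, m < N /\ h m = 0)) as [[m [Hm H]]|Hn].
  - exact (IH m Hm H).
  - exists N. split; auto. intros m Hm H. apply Hn; eauto.
Qed.

Lemma mu_inv P v y : eval (PMu P) v y -> eval P (y :: v) 0.
Proof. intro H. inversion H; auto. Qed.

Lemma halts_E x : halts E x <-> exists a b c d, caseS a b c d x.
Proof.
  split.
  - intros [y Hy]. apply mu_inv in Hy.
    apply (compile_det fexpr) in Hy. rename Hy into H0. symmetry in H0. apply fexpr_zero in H0.
    destruct H0 as [a [b [c [d [_ [_ [_ [_ H]]]]]]]].
    apply testF_zero in H. eauto.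
  - intros [a [b [c [d H]]]]. apply testF_zero in H.
    assert (H0 : den fexpr [S (a+b+c+d); x] = 0).
    { apply fexpr_zero. exists a, b, c, d. repeat split; auto; lia. }
    destruct (least (fun m => den fexpr [m; x]) _ H0) as [n [Hn Hmin]].
    exists n. apply ev_mu.
    + rewrite <- Hn. apply compile_ok.
    + intros m Hm. specialize (Hmin m Hm). cbv beta in Hmin.
      destruct (den fexpr [m; x]) eqn:E0. congruence.
      exists n0. rewrite <- E0. apply compile_ok.
Qed.


Lemma code_atom_inj a1 a2 : code_atom a1 = code_atom a2 -> a1 = a2.
Proof.
  destruct a1, a2; simpl; intro H; apply npair_inj in H; destruct H as [H1 H2];
  try discriminate; apply npair_inj in H2; destruct H2; subst; auto.
Qed.

Lemma code_basic_inj b1 b2 : code_basic b1 = code_basic b2 -> b1 = b2.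
Proof.
  destruct b1, b2; simpl; intro H; apply npair_inj in H; destruct H as [H1 H2];
  try discriminate; apply code_atom_inj in H2; subst; auto.
Qed.

Lemma code_list_inj l1 : forall l2, code_list l1 = code_list l2 -> l1 = l2.
Proof.
  induction l1; destruct l2; simpl; intro H; try discriminate; auto.
  injection H; intro H'. apply npair_inj in H'. destruct H' as [H1 H2].
  apply code_basic_inj in H1. apply IHl1 in H2. subst; auto.
Qed.

Lemma code_inj a1 p1 a2 p2 : code a1 p1 = code a2 p2 -> a1 = a2 /\ p1 = p2.
Proof.
  unfold code; intro H. apply npair_inj in H. destruct H.
  split. apply code_list_inj; auto. apply code_basic_inj; auto.
Qed.

Definition G (A : structure) : structure :=
  Struct (fun p => dom A (fst (unpair p)) /\ dom A (snd (unpair p)))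
         (fun p q => rel A (fst (unpair p)) (fst (unpair q)) \/
                     (fst (unpair p) = fst (unpair q) /\ rel A (snd (unpair p)) (snd (unpair q)))).

Lemma Gdom A a b : dom (G A) (npair a b) <-> dom A a /\ dom A b.
Proof. simpl. rewrite unpair_npair. simpl. tauto. Qed.

Lemma Grel A a b c d : rel (G A) (npair a b) (npair c d) <-> rel A a c \/ (a = c /\ rel A b d).
Proof. simpl. rewrite !unpair_npair. simpl. tauto. Qed.

Lemma npair_surj p : exists a b, p = npair a b.
Proof. exists (fst (unpair p)), (snd (unpair p)). symmetry; apply npair_unpair. Qed.

Ltac alltac := let psi := fresh in let Hin := fresh in intros psi Hin; simpl in Hin;
  repeat (destruct Hin as [<-|Hin]); try contradiction;
  cbn [diagram atom_holds atom_consts dd]; (split; [let c0 := fresh in let Hc0 := fresh in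
     intros c0 Hc0; simpl in Hc0; repeat (destruct Hc0 as [<-|Hc0]); auto; contradiction | auto]).

Ltac getd H x := let K := fresh "K" in
  pose proof (H x ltac:(simpl; tauto)) as K; simpl in K.

Lemma gamma_ok A phi : enum_apply E (diagram A) phi <-> diagram (G A) phi.
Proof.
  split.
  - intros [alpha [Hh Hal]]. apply halts_E in Hh.
    destruct Hh as [a [b [c [d Hc]]]]. unfold caseS in Hc.
    destruct Hc as [H|[[H Hne]|[H|[H|[H|H]]]]]; apply code_inj in H; destruct H; subst.
    + getd Hal (dd a). getd Hal (dd b). simpl. split; auto.
      intros c0 [<-|[<-|[]]]; apply Gdom; firstorder.
    + getd Hal (dd a). getd Hal (dd b). getd Hal (dd c). getd Hal (dd d).
      cbn [diagram atom_holds atom_consts ph1 ph2 ph3 ph4 ph5].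
      split; auto. intros c0 [<-|[<-|[]]]; apply Gdom; firstorder.
    + getd Hal (Pos (ALt a c)). getd Hal (dd b). getd Hal (dd d).
      cbn [diagram atom_holds atom_consts ph1 ph2 ph3 ph4 ph5].
      split. intros c0 [<-|[<-|[]]]; apply Gdom; firstorder.
      apply Grel. firstorder.
    + getd Hal (dd a). getd Hal (Pos (ALt b d)). cbn [diagram atom_holds atom_consts ph1 ph2 ph3 ph4 ph5].
      split. intros c0 [<-|[<-|[]]]; apply Gdom; firstorder.
      apply Grel. firstorder.
    + getd Hal (Neg (ALt a c)). getd Hal (Neg (AEq a c)). getd Hal (dd b). getd Hal (dd d).
      cbn [diagram atom_holds atom_consts ph1 ph2 ph3 ph4 ph5].
      split. intros c0 [<-|[<-|[]]]; apply Gdom; firstorder.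
      intro HH; apply (proj1 (Grel A a b c d)) in HH. firstorder.
    + getd Hal (Neg (ALt a c)). getd Hal (Neg (ALt b d)). cbn [diagram atom_holds atom_consts ph1 ph2 ph3 ph4 ph5].
      split. intros c0 [<-|[<-|[]]]; apply Gdom; firstorder.
      intro HH; apply (proj1 (Grel A a b c d)) in HH. firstorder.
  - intro H.
    assert (Hall : forall (x : basic) (l : list basic), (forall psi, In psi l -> diagram A psi) ->
      diagram A x -> forall psi, In psi (x :: l) -> diagram A psi).
    { intros x l Hl Hx psi [<-|Hp]; auto. }
    assert (Hnil : forall psi, In psi [] -> diagram A psi) by (intros _ []).
    destruct phi as [[p q|p q]|[p q|p q]]; simpl in H; destruct H as [Hd Hr];
    assert (Hp := Hd p ltac:(simpl; auto)); assert (Hq := Hd q ltac:(simpl; auto));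
    destruct (npair_surj p) as [a [b ->]]; destruct (npair_surj q) as [c [d ->]];
    apply (proj1 (Gdom A a b)) in Hp; apply (proj1 (Gdom A c d)) in Hq; destruct Hp as [Ha Hb]; destruct Hq as [Hc Hdd].
    + apply (proj1 (Grel A a b c d)) in Hr. destruct Hr as [Hr|[<- Hr]].
      * exists (al3 a b c d). split. apply halts_E. exists a, b, c, d. unfold caseS. tauto.
        alltac.
      * exists (al4 a b d). split. apply halts_E. exists a, b, a, d. unfold caseS. tauto.
        alltac.
    + apply npair_inj in Hr. destruct Hr; subst.
      exists (al1 c d). split. apply halts_E. exists c, d, c, d. unfold caseS. tauto.
      alltac.
    + rewrite (Grel A a b c d) in Hr. destruct (Nat.eq_dec a c) as [<-|Hne].
      * exists (al6 a b a d). split. apply halts_E. exists a, b, a, d. unfold caseS. tauto.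
        alltac.
      * exists (al5 a b c d). split. apply halts_E. exists a, b, c, d. unfold caseS. tauto.
        alltac.
    + exists (al2 a b c d). split. apply halts_E. exists a, b, c, d. unfold caseS. tauto.
      alltac.
Qed.


Lemma sig_ext n (x y : omega_pow n) : proj1_sig x = proj1_sig y -> x = y.
Proof.
  destruct x as [x Hx], y as [y Hy]; simpl; intro; subst.
  f_equal. apply UIP_dec, Nat.eq_dec.
Qed.

Lemma app_eq_len (l1 l2 l3 l4 : list nat) : length l1 = length l3 -> l1 ++ l2 = l3 ++ l4 -> l1 = l3 /\ l2 = l4.
Proof.
  revert l3; induction l1; destruct l3; simpl; intros Hl H; try discriminate; auto.
  injection H; intros H1 H2. injection Hl; intro. destruct (IHl1 l3) as [-> ->]; subst; auto.
Qed.

Lemma lex_app (l1 l2 l3 l4 : list nat) : length l1 = length l3 ->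
  (lexlt (l1 ++ l2) (l3 ++ l4) <-> lexlt l1 l3 \/ (l1 = l3 /\ lexlt l2 l4)).
Proof.
  revert l3; induction l1; destruct l3; simpl; intros Hl; try discriminate.
  - split; [intro; right; auto | intros [[]|[_ H]]; auto].
  - injection Hl; intro Hl'. rewrite (IHl1 l3 Hl'). split.
    + intros [H|[-> [H|[-> H]]]]; auto.
    + intros [[H|[-> H]]|[H H']]; auto. injection H; intros; subst. auto.
Qed.

Definition mk2 n (x y : omega_pow n) : omega_pow (2 * n).
Proof.
  exists (proj1_sig x ++ proj1_sig y).
  rewrite length_app, (proj2_sig x), (proj2_sig y). lia.
Defined.

Lemma G_iso n A (R : omega_pow n -> omega_pow n -> Prop) (R2 : omega_pow (2*n) -> omega_pow (2*n) -> Prop)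
  (HR : forall a b c d, R2 (mk2 n a b) (mk2 n c d) <-> R a c \/ (a = c /\ R b d)) :
  iso_to A (omega_pow n) R -> iso_to (G A) (omega_pow (2*n)) R2.
Proof.
  intros [f [Hinj [Hsur Hord]]].
  exists (fun p => mk2 n (f (fst (unpair p))) (f (snd (unpair p)))). split; [|split].
  - intros x y [Hx1 Hx2] [Hy1 Hy2] H.
    assert (H' := f_equal (@proj1_sig _ _) H). simpl in H'.
    apply app_eq_len in H'. 2: rewrite !(proj2_sig (f _)); auto.
    destruct H' as [H1 H2]. apply sig_ext, Hinj in H1; auto. apply sig_ext, Hinj in H2; auto.
    rewrite <- (npair_unpair x), <- (npair_unpair y). congruence.
  - intros t. destruct t as [l Hl].
    assert (L1 : length (firstn n l) = n) by (rewrite length_firstn; lia).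
    assert (L2 : length (skipn n l) = n) by (rewrite length_skipn; lia).
    destruct (Hsur (exist _ _ L1)) as [a [Ha Ea]].
    destruct (Hsur (exist _ _ L2)) as [b [Hb Eb]].
    exists (npair a b). split. apply (proj2 (Gdom A a b)); auto. rewrite unpair_npair.
    apply sig_ext. simpl. rewrite Ea, Eb. simpl. apply firstn_skipn.
  - intros x y [Hx1 Hx2] [Hy1 Hy2]. simpl. rewrite HR, !Hord by auto.
    split; intros [H|[H1 H2]]; auto; right; split; auto.
Qed.

Lemma class_G n A : class_omega_pow n A -> class_omega_pow (2*n) (G A).
Proof.
  unfold class_omega_pow, omega_pow_rev_lt, omega_pow_lt. intros [H|H]; [left|right];
  eapply G_iso; try exact H; intros a b c d; simpl.
  - rewrite lex_app by (rewrite (proj2_sig a), (proj2_sig c); auto).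
    split; intros [H1|[H1 H2]]; auto;
    right; split; auto. apply sig_ext; auto. subst; auto.
  - rewrite lex_app by (rewrite (proj2_sig a), (proj2_sig c); auto).
    split; intros [H1|[H1 H2]]; auto;
    right; split; auto. apply sig_ext; auto. subst; auto.
Qed.

Lemma G_fwd n A : iso_to A (omega_pow n) (omega_pow_lt n) -> iso_to (G A) (omega_pow (2*n)) (omega_pow_lt (2*n)).
Proof.
  intro H. unfold omega_pow_lt in *.
  eapply G_iso; try exact H; intros a b c d; simpl.
  rewrite lex_app by (rewrite (proj2_sig a), (proj2_sig c); auto).
  split; intros [H1|[H1 H2]]; auto;
  right; split; auto. apply sig_ext; auto. subst; auto.
Qed.

Lemma G_rev n A : iso_to A (omega_pow n) (omega_pow_rev_lt n) -> iso_to (G A) (omega_pow (2*n)) (omega_pow_rev_lt (2*n)).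
Proof.
  intro H. unfold omega_pow_rev_lt, omega_pow_lt in *.
  eapply G_iso; try exact H; intros a b c d; simpl.
  rewrite lex_app by (rewrite (proj2_sig a), (proj2_sig c); auto).
  split; intros [H1|[H1 H2]]; auto;
  right; split; auto. apply sig_ext; auto. subst; auto.
Qed.


Lemma iso_same X Y T R : iso_to X T R -> iso_to Y T R -> struct_iso X Y.
Proof.
  intros [f [fi [fs fo]]] [g [gi [gs go]]].
  exists (fun x => proj1_sig (constructive_indefinite_description _ (gs (f x)))).
  split; [|split; [|split]].
  - intros x _. destruct (constructive_indefinite_description _ _) as [y [Hy Ey]]; auto.
  - intros x x' Hx Hx'.
    destruct (constructive_indefinite_description _ (gs (f x))) as [y [Hy Ey]].
    destruct (constructive_indefinite_description _ (gs (f x'))) as [y' [Hy' Ey']].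
    simpl. intros ->. apply fi; auto. congruence.
  - intros z Hz. destruct (fs (g z)) as [x [Hx Ex]]. exists x. split; auto.
    destruct (constructive_indefinite_description _ (gs (f x))) as [y [Hy Ey]]. simpl.
    apply gi; auto. congruence.
  - intros x x' Hx Hx'.
    destruct (constructive_indefinite_description _ (gs (f x))) as [y [Hy Ey]].
    destruct (constructive_indefinite_description _ (gs (f x'))) as [y' [Hy' Ey']].
    simpl. rewrite fo, go by auto. rewrite Ey, Ey'. tauto.
Qed.

Lemma lex_zero l : l <> repeat 0 (length l) -> lexlt (repeat 0 (length l)) l.
Proof.
  induction l; simpl; intro H. congruence.
  destruct a. right. split; auto. apply IHl. intro E; apply H; rewrite <- E; auto.
  left; lia.
Qed.

Lemma lex_zero' k l : length l = k -> l <> repeat 0 k -> lexlt (repeat 0 k) l.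
Proof. intros <-. apply lex_zero. Qed.

Lemma zeros k : length (repeat 0 k) = k.
Proof. apply repeat_length. Qed.

Lemma no_max k Y (g : nat -> omega_pow k) : 1 <= k ->
  (forall t, exists y, dom Y y /\ g y = t) ->
  forall y0, dom Y y0 -> ~ (forall y, dom Y y -> y <> y0 -> lexlt (proj1_sig (g y)) (proj1_sig (g y0))).
Proof.
  intros Hk gs y0 Hy0 H.
  destruct (g y0) as [l Hl] eqn:Eg. destruct l as [|h tl]. simpl in Hl; lia.
  assert (L : length (S h :: tl) = k) by (simpl in *; lia).
  destruct (gs (exist _ _ L)) as [y [Hy Ey]].
  assert (y <> y0). { intros ->. rewrite Eg in Ey. injection Ey. lia. }
  specialize (H y Hy H0). rewrite Ey in H. simpl in H. lia.
Qed.

Lemma not_iso_1 k X Y : 1 <= k -> iso_to X (omega_pow k) (omega_pow_lt k) ->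
  iso_to Y (omega_pow k) (omega_pow_rev_lt k) -> ~ struct_iso X Y.
Proof.
  intros Hk [f [fi [fs fo]]] [g [gi [gs go]]] [h [hd [hi [hs ho]]]].
  destruct (fs (exist _ _ (zeros k))) as [x0 [Hx0 Ex0]].
  apply (no_max k Y g Hk gs (h x0) (hd _ Hx0)).
  intros y Hy Hne. destruct (hs y Hy) as [x [Hx <-]].
  assert (x <> x0) by (intros ->; auto).
  assert (rel X x0 x).
  { apply fo; auto. unfold omega_pow_lt. rewrite Ex0. simpl.
    apply lex_zero'. apply (proj2_sig (f x)).
    intro E. apply H. apply fi; auto. rewrite Ex0. apply sig_ext. simpl. auto. }
  apply ho in H0; auto. apply go in H0; auto.
Qed.

Lemma not_iso_2 k X Y : 1 <= k -> iso_to X (omega_pow k) (omega_pow_rev_lt k) ->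
  iso_to Y (omega_pow k) (omega_pow_lt k) -> ~ struct_iso X Y.
Proof.
  intros Hk [f [fi [fs fo]]] [g [gi [gs go]]] [h [hd [hi [hs ho]]]].
  destruct (fs (exist _ _ (zeros k))) as [x0 [Hx0 Ex0]].
  apply (no_max k Y g Hk gs (h x0) (hd _ Hx0)).
  intros y Hy Hne. destruct (hs y Hy) as [x [Hx <-]].
  assert (x <> x0) by (intros ->; auto).
  assert (rel X x x0).
  { apply fo; auto. unfold omega_pow_rev_lt, omega_pow_lt. rewrite Ex0. simpl.
    apply lex_zero'. apply (proj2_sig (f x)).
    intro E. apply H. apply fi; auto. rewrite Ex0. apply sig_ext. simpl. auto. }
  apply ho in H0; auto. apply go in H0; auto.
Qed.

Lemma diag_dom X X' : (forall phi, diagram X phi <-> diagram X' phi) -> forall c, dom X c <-> dom X' c.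
Proof.
  intros H c. specialize (H (Pos (AEq c c))). simpl in H. split; intro Hc.
  - destruct (proj1 H) as [K _]. split; auto. intros c0 [<-|[<-|[]]]; auto.
    apply K; simpl; auto.
  - destruct (proj2 H) as [K _]. split; auto. intros c0 [<-|[<-|[]]]; auto.
    apply K; simpl; auto.
Qed.

Lemma diag_rel X X' : (forall phi, diagram X phi <-> diagram X' phi) -> forall x y,
  dom X x -> dom X y -> (rel X x y <-> rel X' x y).
Proof.
  intros H x y Hx Hy. pose proof (diag_dom X X' H) as HD.
  specialize (H (Pos (ALt x y))). simpl in H. split; intro Hr.
  - apply (proj1 H). split; auto. intros c0 [<-|[<-|[]]]; auto.
  - apply (proj2 H). split; auto. intros c0 [<-|[<-|[]]]; apply HD; auto.
Qed.

Lemma diag_transfer X X' Y Y' : (forall phi, diagram X phi <-> diagram X' phi) ->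
  (forall phi, diagram Y phi <-> diagram Y' phi) -> struct_iso X Y -> struct_iso X' Y'.
Proof.
  intros HX HY [h [hd [hi [hs ho]]]].
  pose proof (diag_dom _ _ HX) as DX. pose proof (diag_dom _ _ HY) as DY.
  exists h. split; [|split; [|split]].
  - intros x Hx. apply DY, hd, DX, Hx.
  - intros x y Hx Hy. apply hi; apply DX; auto.
  - intros z Hz. destruct (hs z (proj2 (DY z) Hz)) as [x [Hx E]]. exists x; split; auto. apply DX; auto.
  - intros x y Hx Hy. apply DX in Hx. apply DX in Hy.
    rewrite <- (diag_rel _ _ HX) by auto. rewrite <- (diag_rel _ _ HY) by auto. apply ho; auto.
Qed.

Lemma diag_sym X X' : (forall phi, diagram X phi <-> diagram X' phi) -> (forall phi, diagram X' phi <-> diagram X phi).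
Proof. intros H phi; rewrite H; tauto. Qed.

Lemma key n A B : 1 <= n -> class_omega_pow n A -> class_omega_pow n B ->
  (struct_iso A B <-> struct_iso (G A) (G B)).
Proof.
  intros Hn HA HB.
  assert (H2 : 1 <= 2 * n) by lia.
  unfold class_omega_pow in *.
  destruct HA as [HA|HA], HB as [HB|HB].
  - split; intro; eapply iso_same; eauto using G_fwd.
  - split; intro I; exfalso.
    + exact (not_iso_1 n A B Hn HA HB I).
    + exact (not_iso_1 (2*n) (G A) (G B) H2 (G_fwd _ _ HA) (G_rev _ _ HB) I).
  - split; intro I; exfalso.
    + exact (not_iso_2 n A B Hn HA HB I).
    + exact (not_iso_2 (2*n) (G A) (G B) H2 (G_rev _ _ HA) (G_fwd _ _ HB) I).
  - split; intro; eapply iso_same; eauto using G_rev.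
Qed.

Theorem proposition6p1 (n : nat) :
  1 <= n ->
  comp_reducible (class_omega_pow n) (class_omega_pow (2 * n)).
Proof.
  intro Hn. exists E. split.
  - intros A HA. exists (G A). split. apply class_G; auto. intro phi. apply gamma_ok.
  - intros A B A' B' HA HB HA' HB'.
    assert (DA : forall phi, diagram (G A) phi <-> diagram A' phi).
    { intro phi. rewrite <- HA'. symmetry. apply gamma_ok. }
    assert (DB : forall phi, diagram (G B) phi <-> diagram B' phi).
    { intro phi. rewrite <- HB'. symmetry. apply gamma_ok. }
    rewrite (key n A B Hn HA HB). split; intro I.
    + eapply diag_transfer; eauto.
    + eapply diag_transfer; [apply diag_sym, DA | apply diag_sym, DB | exact I].
Qed.
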